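(* There exists a directed set $\mathcal A$, which is not a cardinal number, with $\operatorname{card}(\mathcal A)=\operatorname{cov}(\mathcal N)$, such that $\mathcal{ND}_{\mathcal A}$ is strongly $\mathfrak c$-algebrable in $\left(\mathbb R^{[0,1]}\right)^{\mathcal A}$.
   Context: A directed set is a nonempty set $\mathcal A$ with a reflexive transitive relation $\le$ in which any two elements have an upper bound; $x_A\to x$ if for each neighbourhood $U$ of $x$ there is $A_0$ with $x_A\in U$ for $A\ge A_0$. $\left(\mathbb R^{[0,1]}\right)^{\mathcal A}$ is the commutative real algebra of nets of functions $[0,1]\to\mathbb R$ with indexwise operations. $\lambda$ is Lebesgue measure, $\mathcal N$ the null subsets of $[0,1]$, $\operatorname{cov}(\mathcal N)$ the least size of a subfamily of $\mathcal N$ covering $[0,1]$. $\mathcal{ND}_{\mathcal A}$: nets of Lebesgue measurable $f_A:[0,1]\to\mathbb R$ such that there is an integrable $g$ with $|f_A|\le g$ a.e. for all $A$, $f_A\to f$ a.e. for some integrable $f$, and $\int|f_A-f|\,d\lambda$ does not converge to $0$. A subset $S$ of a commutative algebra is strongly $\kappa$-algebrable if there is a set $X$ of $\kappa$ algebraically independent elements such that every nonzero element of the (non-unital) algebra generated by $X$ belongs to $S$. *)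

(* Defs.v *)
From HB Require Import structures.
From mathcomp Require Import all_boot all_order all_algebra.
From mathcomp Require Import mpoly.
From mathcomp Require Import all_classical all_reals all_analysis.
Set Implicit Arguments. Unset Strict Implicit. Unset Printing Implicit Defensive.
Import Order.TTheory GRing.Theory Num.Theory.
Import numFieldNormedType.Exports.
Local Open Scope classical_set_scope.
Local Open Scope ring_scope.

Definition directed_set (A : Type) (le : A -> A -> Prop) : Prop :=
  [/\ (exists a : A, True),
      (forall a, le a a),
      (forall a b c, le a b -> le b c -> le a c) &
      (forall a b, exists c, le a c /\ le b c)].

(* (A, le) is (order-isomorphic to) a cardinal number with its natural order,
   i.e. an initial ordinal: a well-order all of whose proper initial segments
   have strictly smaller cardinality than A. *)
Definition is_cardinal_order (A : Type) (le : A -> A -> Prop) : Prop :=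
  (forall a, le a a) /\ (forall a b, le a b -> le b a -> a = b) /\
  [/\
      (forall a b c, le a b -> le b c -> le a c),
      (forall a b, le a b \/ le b a),
      (forall S : set A, S !=set0 -> exists2 m, S m & forall s, S s -> le m s) &
      (forall a : A, ~ ([set: A] #<= [set b | le b a /\ b <> a])%card)].

Definition net_cvg (A : Type) (le : A -> A -> Prop) (T : topologicalType)
  (u : A -> T) (l : T) : Prop :=
  forall U, nbhs l U -> exists a0, forall a, le a0 a -> U (u a).

Definition I01 (R : realType) : set R := `[0, 1]%classic.
Arguments I01 R : clear implicits.

Definition null01 (R : realType) (N : set R) : Prop :=
  N `<=` I01 R /\ (@lebesgue_measure R).-negligible N.

Definition null_cover (R : realType) (F : set (set R)) : Prop :=
  (forall N, F N -> null01 N) /\ I01 R `<=` \bigcup_(N in F) N.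

(* card(A) = cov(N): the least size of a family of null subsets of [0,1]
   covering [0,1] is attained and equals card(A). *)
Definition card_is_covN (R : realType) (A : Type) : Prop :=
  (exists F : set (set R), null_cover F /\ ([set: A] #= F)%card) /\
  (forall F : set (set R), null_cover F -> ([set: A] #<= F)%card).

(* ---------- the algebra (R^[0,1])^A ----------
   A function [0,1] -> R is represented by its extension by zero R -> R;
   thus R^[0,1] is identified with the (pointwise) algebra of functions
   R -> R vanishing outside [0,1], and nets are A -> (R -> R). *)
Definition net_elt (R : realType) (A : Type) (f : A -> R -> R) : Prop :=
  forall a x, ~ I01 R x -> f a x = 0.

Definition ND (R : realType) (A : Type) (le : A -> A -> Prop)
  (f : A -> R -> R) : Prop :=
  net_elt f /\
  (forall a, measurable_fun (I01 R) (f a)) /\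
  (exists g : R -> R, (@lebesgue_measure R).-integrable (I01 R) (EFin \o g) /\
     forall a, {ae @lebesgue_measure R, forall x, I01 R x -> `|f a x| <= g x}) /\
  (exists F : R -> R, (@lebesgue_measure R).-integrable (I01 R) (EFin \o F) /\
     {ae @lebesgue_measure R, forall x, I01 R x ->
        net_cvg le (fun a => f a x) (F x)} /\
     ~ net_cvg le (fun a => (\int[@lebesgue_measure R]_(x in I01 R)
                               (`|f a x - F x|)%:E)%E) 0%E).

Definition net_eval (R : realType) (A : Type) (n : nat)
  (P : mpoly.mpoly n R) (x : 'I_n -> A -> R -> R) : A -> R -> R :=
  fun a t => mpoly.meval (fun i => x i a t) P.

(* non-unital polynomial: zero constant term *)
Definition no_const (R : realType) (n : nat) (P : mpoly.mpoly n R) : Prop :=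
  mpoly.mcoeff (@mpoly.mnm0 n) P = 0.

(* strong kappa-algebrability, with kappa = card(K) *)
Definition strongly_algebrable (R : realType) (A : Type) (K : Type)
  (S : (A -> R -> R) -> Prop) : Prop :=
  exists X : set (A -> R -> R),
    (forall f, X f -> net_elt f) /\
    (X #= [set: K])%card /\
    (forall (n : nat) (x : 'I_n -> A -> R -> R) (P : mpoly.mpoly n R),
       injective x -> (forall i, X (x i)) -> P != 0 -> no_const P ->
       net_eval P x <> (fun _ _ => 0)) /\
    (forall (n : nat) (x : 'I_n -> A -> R -> R) (P : mpoly.mpoly n R),
       injective x -> (forall i, X (x i)) -> no_const P ->
       net_eval P x <> (fun _ _ => 0) -> S (net_eval P x)).

(* Main.v *)
Require Import Defs.
From HB Require Import structures.
From mathcomp Require Import all_boot all_order all_algebra.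
From mathcomp Require Import mpoly.
From mathcomp Require Import all_classical all_reals all_analysis.
Set Implicit Arguments. Unset Strict Implicit. Unset Printing Implicit Defensive.
Local Open Scope classical_set_scope.

Definition inj_into {T U} (A : set T) (B : set U) :=
  exists f : T -> U, (forall a, A a -> B (f a)) /\
    (forall a b, A a -> A b -> f a = f b -> a = b).

Lemma inj_into_trans {T U V} (A : set T) (B : set U) (C : set V) :
  inj_into A B -> inj_into B C -> inj_into A C.
Proof.
move=> [f [fAB finj]] [g [gBC ginj]]; exists (g \o f); split.
  by move=> a Aa; apply: gBC; apply: fAB.
by move=> a b Aa Ab /= /ginj => /(_ (fAB _ Aa) (fAB _ Ab)); apply: finj.
Qed.

Lemma min_inj {T} (C : set (set T)) (X1 : set T) : C X1 ->
  exists2 X0, C X0 & forall X, C X -> inj_into X0 X.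
Proof.
move=> CX1.
pose I := {X : set T | C X}.
pose good (D : set (I -> T)) := (forall d, D d -> forall i, proj1_sig i (d i)) /\
  (forall d d', D d -> D d' -> forall i, d i = d' i -> d = d').
have [M [gM maxM]] : exists M, good M /\ forall B, M `<` B -> ~ good B.
  apply: Zorn_bigcup => F FP Ftot; split.
    by move=> d [D FD Dd] i; exact: (FP D FD).1 d Dd i.
  move=> d d' [D FD Dd] [D' FD' D'd'] i eq.
  have [sub|sub] := Ftot D D' FD FD'.
    exact: (FP D' FD').2 _ _ (sub d Dd) D'd' i eq.
  exact: (FP D FD).2 _ _ Dd (sub d' D'd') i eq.
have [i0 Hi0] : exists i0 : I, forall t, proj1_sig i0 t -> exists2 d, M d & d i0 = t.
  apply: contrapT => H.
  have H' : forall i : I, exists t, proj1_sig i t /\ forall d, M d -> d i <> t.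
    move=> i; apply: contrapT => Hn; apply: H; exists i => t it.
    apply: contrapT => nd; apply: Hn; exists t; split=> // d Md dit; apply: nd.
    by exists d.
  have [ds Hds] := choice H'.
  apply: (maxM (M `|` [set ds])).
    split; first by move=> d Md; left.
    move=> /(_ ds (or_intror erefl)) Mds.
    exact: (Hds (exist _ X1 CX1)).2 ds Mds erefl.
  split.
    move=> d [Md|->] i; [exact: gM.1|exact: (Hds i).1].
  move=> d d' [Md|->] [Md'|->] i eq //.
  - exact: gM.2 _ _ Md Md' i eq.
  - by case: ((Hds i).2 d Md eq).
  - by case: ((Hds i).2 d' Md' (esym eq)).
exists (proj1_sig i0); first exact: proj2_sig i0.
move=> X CX; pose j : I := exist _ X CX.
pose F t := match pselect (exists2 d, M d & d i0 = t) with
  | left h => (s2val (cid2 h)) j | right _ => t end.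
exists F; split.
  move=> t Ht; rewrite /F; case: pselect => [h|/(_ (Hi0 t Ht))//].
  exact: (gM.1 _ (s2valP (cid2 h)) j).
move=> t t' Ht Ht'; rewrite /F.
case: pselect => [h|/(_ (Hi0 t Ht))//]; case: pselect => [h'|/(_ (Hi0 t' Ht'))//].
move=> eq; have := gM.2 _ _ (s2valP (cid2 h)) (s2valP (cid2 h')) j eq.
by move=> ed; rewrite -(s2valP' (cid2 h)) -(s2valP' (cid2 h')) ed.
Qed.

Section Square.
Variables (T : Type) (e : nat -> T).
Hypothesis einj : injective e.

Record goodp (Y : set T) (f : T * T -> T) : Prop := Goodp {
  gp0 : range e `<=` Y;
  gp1 : forall u v, Y u -> Y v -> Y (f (u, v));
  gp2 : forall u v u' v', Y u -> Y v -> Y u' -> Y v' ->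
          f (u, v) = f (u', v') -> u = u' /\ v = v' }.

Definition extp (a b : set T * (T * T -> T)) :=
  a.1 `<=` b.1 /\ forall u v, a.1 u -> a.1 v -> a.2 (u, v) = b.2 (u, v).

Definition Sg := {p : set T * (T * T -> T) | goodp p.1 p.2}.

Let inv (u : T) : nat := match pselect (exists n, e n = u) with
  | left h => proj1_sig (cid h) | right _ => 0%N end.
Let invK n : inv (e n) = n.
Proof.
rewrite /inv; case: pselect => [h|[]]; last by exists n.
by apply: einj; rewrite (proj2_sig (cid h)).
Qed.

Let f0 (w : T * T) : T := e (pickle (inv w.1, inv w.2)).

Let good0 : goodp (range e) f0.
Proof.
split => //.
- move=> u v u' v' [a _ <-] [b _ <-] [c _ <-] [d _ <-].
  rewrite /f0 /= !invK => /einj /(pcan_inj pickleK) [-> ->]; by [].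
Qed.

Let t0 : Sg := exist _ (range e, f0) good0.

Let Rel (a b : Sg) : bool := `[< extp (proj1_sig a) (proj1_sig b) >].

Lemma Sg_upper (A : set Sg) : total_on A Rel -> exists t, forall s, A s -> Rel s t.
Proof.
move=> Atot.
have [[a0 Aa0]|A0] := pselect (A !=set0); last first.
  by exists t0 => s As; case: A0; exists s.
pose Y := \bigcup_(a in A) (proj1_sig a).1.
have two u v : Y u -> Y v -> exists2 a, A a & (proj1_sig a).1 u /\ (proj1_sig a).1 v.
  move=> [a Aa au] [b Ab bv].
  have [/asboolP [sab _]|/asboolP [sba _]] := Atot a b Aa Ab.
  - by exists b => //; split => //; apply: sab.
  - by exists a => //; split => //; apply: sba.
pose f (w : T * T) := match pselect (exists2 a, A a &
      (proj1_sig a).1 w.1 /\ (proj1_sig a).1 w.2) with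
  | left h => (proj1_sig (s2val (cid2 h))).2 w | right _ => w.1 end.
have key a u v : A a -> (proj1_sig a).1 u -> (proj1_sig a).1 v ->
    f (u, v) = (proj1_sig a).2 (u, v).
  move=> Aa au av; rewrite /f; case: pselect => [h|[]]; last by exists a.
  have := s2valP (cid2 h); have := s2valP' (cid2 h).
  set b := s2val (cid2 h) => -[bu bv] Ab.
  have [/asboolP [_ sab]|/asboolP [_ sba]] := Atot a b Aa Ab.
  - by rewrite sab.
  - by rewrite sba.
have gY : goodp Y f.
  split.
  - move=> _ [n _ <-]; exists a0 => //; apply: (gp0 (proj2_sig a0)).
    by exists n.
  - move=> u v Yu Yv; have [a Aa [au av]] := two u v Yu Yv.
    rewrite (key a) //; exists a => //; exact: (gp1 (proj2_sig a)).
  - move=> u v u' v' Yu Yv Yu' Yv'.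
    have [a Aa [au av]] := two u v Yu Yv.
    have [b Ab [bu bv]] := two u' v' Yu' Yv'.
    rewrite (key a) // (key b) //.
    have [/asboolP [sab hab]|/asboolP [sba hba]] := Atot a b Aa Ab.
    + rewrite (hab u v) //; apply: (gp2 (proj2_sig b)) => //; exact: sab.
    + rewrite (hba u' v') //; apply: (gp2 (proj2_sig a)) => //; exact: sba.
exists (exist _ (Y, f) gY) => s As; apply/asboolP; split => /=.
  by move=> x sx; exists s.
by move=> u v su sv; rewrite (key s).
Qed.

Lemma Rel_refl t : Rel t t.
Proof. by apply/asboolP; split => // u v. Qed.

Lemma Rel_trans r s t : Rel r s -> Rel s t -> Rel r t.
Proof.
move=> /asboolP [s1 h1] /asboolP [s2 h2]; apply/asboolP; split.
  by move=> x /s1 /s2.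
by move=> u v ru rv; rewrite h1 // h2 //; [exact: s1|exact: s1].
Qed.

Lemma sq_inj : exists p : T * T -> T, injective p.
Proof.
have [M Mmax] := @ZL_preorder Sg t0 Rel Rel_refl Rel_trans Sg_upper.
case: M Mmax => [[Y f] gM] /= Mmax.
have [X0 [->|->] H0] := @min_inj T [set Y; ~` Y] Y (or_introl erefl).
- (* Y injects into ~Y : extend, contradiction *)
  have [g [gYN ginj]] := H0 (~` Y) (or_intror erefl).
  pose pi1 (z : T) := if pselect (Y z) then z else
    match pselect (exists2 y, Y y & g y = z) with
    | left h => s2val (cid2 h) | right _ => z end.
  pose Z := g @` Y.
  have pi1Y z : (Y `|` Z) z -> Y (pi1 z).
    rewrite /pi1; case: pselect => // nYz [//|[y Yy gyz]].
    case: pselect => [h|[]]; last by exists y.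
    exact: (s2valP (cid2 h)).
  have pi1Z z : ~ Y z -> Z z -> g (pi1 z) = z.
    move=> nYz [y Yy gyz]; rewrite /pi1; case: (pselect (Y z)) => [//|nYz'].
    case: pselect => [h|[]]; last by exists y.
    exact: (s2valP' (cid2 h)).
  pose tag (b1 b2 : bool) := e (b1 + 2 * b2)%N.
  pose f' (w : T * T) := if pselect (Y w.1 /\ Y w.2) then f w else
    g (f (f (pi1 w.1, pi1 w.2), tag `[< Y w.1 >] `[< Y w.2 >])).
  have Ytag b1 b2 : Y (tag b1 b2) by apply: (gp0 gM); exists (b1 + 2 * b2)%N.
  have tag_inj b1 b2 b3 b4 : tag b1 b2 = tag b3 b4 -> b1 = b3 /\ b2 = b4.
    by move=> /einj; case: b1; case: b2; case: b3; case: b4.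
  have g' : goodp (Y `|` Z) f'.
    split.
    - by move=> x /(gp0 gM) Yx; left.
    - move=> u v Yu Yv; rewrite /f' /=; case: pselect => [[Yu' Yv']|nYuv].
        by left; apply: (gp1 gM).
      right; exists (f (f (pi1 u, pi1 v), tag `[< Y u >] `[< Y v >])) => //.
      by apply: (gp1 gM); [apply: (gp1 gM); apply: pi1Y|apply: Ytag].
    - move=> u v u' v' Yu Yv Yu' Yv'; rewrite /f' /=.
      have inner a b : (Y `|` Z) a -> (Y `|` Z) b ->
          Y (f (f (pi1 a, pi1 b), tag `[< Y a >] `[< Y b >])).
        move=> Ya Yb; apply: (gp1 gM); last exact: Ytag.
        by apply: (gp1 gM); apply: pi1Y.
      case: pselect => [[Y1 Y2]|N1]; case: pselect => [[Y3 Y4]|N2]. all: rewrite /=.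
      + exact: (gp2 gM).
      + move=> E; have := gYN _ (inner u' v' Yu' Yv'); rewrite -E.
        by case; apply: (gp1 gM).
      + move=> E; have := gYN _ (inner u v Yu Yv); rewrite E.
        by case; apply: (gp1 gM).
      + move=> /ginj E; have {E} := E (inner u v Yu Yv) (inner u' v' Yu' Yv').
        move=> /(gp2 gM) [].
        * by apply: (gp1 gM); apply: pi1Y.
        * exact: Ytag.
        * by apply: (gp1 gM); apply: pi1Y.
        * exact: Ytag.
        move=> E1 /tag_inj [bu bv].
        have [pu pv] := gp2 gM (pi1Y _ Yu) (pi1Y _ Yv) (pi1Y _ Yu') (pi1Y _ Yv') E1.
        have same a b : (Y `|` Z) a -> (Y `|` Z) b -> `[< Y a >] = `[< Y b >] ->
            pi1 a = pi1 b -> a = b.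
          move=> Za Zb; have [Ya|nYa] := pselect (Y a).
            move/asboolP: (Ya) => -> /esym /asboolP Yb.
            by rewrite /pi1; case: (pselect (Y a)) => [ya|//]; case: (pselect (Y b)) => [yb|//].
          move=> /esym eb; have nYb : ~ Y b.
            by move=> Yb; apply: nYa; apply/asboolP; rewrite -eb; apply/asboolP.
          move=> pe; rewrite -(pi1Z a nYa) ?pe ?pi1Z //.
          + by case: Zb.
          + by case: Za.
        by split; apply: same.
  pose M' : Sg := exist _ (Y `|` Z, f') g'.
  have : Rel (exist _ (Y, f) gM) M'.
    apply/asboolP; split => /=; first by move=> x Yx; left.
    by move=> u v Yu Yv; rewrite /f' /=; case: pselect => // -[].
  move=> /Mmax /asboolP [/= sub _].
  have : Y (g (e 0)).
    by apply: sub; right; exists (e 0) => //; apply: (gp0 gM); exists 0%N.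
  move=> H; have Ye0 : Y (e 0) by apply: (gp0 gM); exists 0%N.
  by case: (gYN (e 0) Ye0 H).
-
  have [g [gNY ginj]] := H0 Y (or_introl erefl).
  pose h t := if pselect (Y t) then f (t, e 0) else f (g t, e 1).
  have e0Y : Y (e 0) by apply: (gp0 gM); exists 0%N.
  have e1Y : Y (e 1) by apply: (gp0 gM); exists 1%N.
  have hY t : Y (h t).
    rewrite /h; case: pselect => Yt; apply: (gp1 gM) => //; exact: gNY.
  have hinj : injective h.
    move=> a b; rewrite /h; case: pselect => Ya; case: pselect => Yb.
    - by move=> /(gp2 gM) [].
    - move=> /(gp2 gM) [] // => [|_ /einj //]; exact: gNY.
    - move=> /(gp2 gM) [] // => [|_ /einj //]; exact: gNY.
    - move=> /(gp2 gM) [] // => [||/ginj]; try exact: gNY.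
      by move=> E _; apply: E.
  exists (fun w => f (h w.1, h w.2)) => -[a b] [c d] /= /(gp2 gM) [] //.
  by move=> /hinj -> /hinj ->.
Qed.

Definition encb (p : T * T -> T) : seq T -> T :=
  fix encb s := if s is x :: s' then p (x, encb s') else e 0.

Lemma seq_inj : exists enc : seq T -> T, injective enc.
Proof.
have [p pinj] := sq_inj.
exists (fun s => p (e (size s), encb p s)) => s s' /pinj [/einj].
elim: s s' => [|x s IH] [|x' s'] //= [/IH sz] /pinj [-> /sz ->] //.
Qed.
End Square.

Import Order.TTheory GRing.Theory Num.Theory.
Local Open Scope ring_scope.

Lemma digits n (D : nat) (m m' : 'I_n -> nat) :
  (forall i, (m i < D)%N) -> (forall i, (m' i < D)%N) ->
  (\sum_(i < n) m i * D ^ i = \sum_(i < n) m' i * D ^ i)%N -> forall i, m i = m' i.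
Proof.
elim: n m m' => [|n IH] m m' mD m'D; first by move=> _ [].
rewrite !big_ord_recl /= !expn0 !muln1.
have eS (k : 'I_n.+1 -> nat) : (\sum_(i < n) k (lift ord0 i) * D ^ (bump 0 i))%N =
    (D * \sum_(i < n) k (lift ord0 i) * D ^ i)%N.
  rewrite big_distrr /=; apply: eq_bigr => i _.
  by rewrite /bump /= add1n expnS mulnCA.
rewrite !eS => E.
have D0 : (0 < D)%N by apply: leq_ltn_trans (mD ord0).
have e0 : m ord0 = m' ord0.
  have := congr1 (fun x => x %% D)%N E => /=.
  by rewrite ![(_ + D * _)%N]addnC !(mulnC D) !modnMDl !modn_small.
move: E; rewrite e0 => /addnI /eqP; rewrite eqn_pmul2l // => /eqP E.
have IH' := IH (fun i => m (lift ord0 i)) (fun i => m' (lift ord0 i)) (fun i => mD _)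
  (fun i => m'D _) E.
by move=> i; case: (unliftP ord0 i) => [j ->|->].
Qed.

Lemma count_le (T : Type) (a b : pred T) (s : seq T) :
  (forall z, a z -> b z) -> (count a s <= count b s)%N.
Proof.
move=> ab; elim: s => //= y s IH; apply: leq_add => //.
by case: (boolP (a y)) => // /ab ->.
Qed.

Lemma count_lt (T : eqType) (a b : pred T) (s : seq T) x :
  (forall z, a z -> b z) -> x \in s -> b x -> ~~ a x -> (count a s < count b s)%N.
Proof.
move=> ab; elim: s => //= y s IH; rewrite inE => /orP[/eqP <-|xs] bx nax.
  by rewrite (negbTE nax) bx add0n add1n ltnS count_le.
rewrite -addnS; apply: leq_add (IH xs bx nax).
by case: (boolP (a y)) => // /ab ->.
Qed.

Section Sep.
Variable R : realType.

Lemma sep n (r : 'I_n -> R) : injective r ->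
  exists q : seq rat, injective (fun i => count (fun z : rat => ratr z < r i) q).
Proof.
move=> rinj.
have mid i i' : r i < r i' -> exists q : rat, r i < ratr q < r i'.
  by move=> /rat_in_itvoo [q]; rewrite in_itv /=; exists q.
pose md i i' := match pselect (r i < r i') with
  | left h => proj1_sig (cid (mid i i' h)) | right _ => 0%R end.
have mdP i i' : r i < r i' -> r i < ratr (md i i') < r i'.
  by move=> h; rewrite /md; case: pselect => [h'|//]; exact: (proj2_sig (cid (mid i i' h'))).
pose q := [seq md i i' | i <- enum 'I_n, i' <- enum 'I_n].
exists q.
have lt i i' : r i < r i' -> (count (fun z : rat => (ratr z < r i)%R) q <
    count (fun z : rat => (ratr z < r i')%R) q)%N.
  move=> h; have /andP[h1 h2] := mdP i i' h.
  apply: (@count_lt _ _ _ _ (md i i')).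
  - by move=> z /= zl; apply: lt_trans zl h.
  - by apply/allpairsP; exists (i, i'); rewrite !mem_enum.
  - by [].
  - by rewrite -leNgt ltW.
move=> i i' /= E; apply: rinj; case: (ltgtP (r i) (r i')) => // h.
- by have := lt _ _ h; rewrite E ltnn.
- by have := lt _ _ h; rewrite E ltnn.
Qed.

Lemma mdeg_ge n (m : 'X_{1..n}) i : (m i <= mdeg m)%N.
Proof. by rewrite mdegE (bigD1 i) //= leq_addr. Qed.

Lemma kronecker n (P : {mpoly R[n]}) : P != 0 ->
  exists k : nat, meval (fun i => (k.+2%:R^-1 : R) ^+ (msize P ^ i)) P != 0.
Proof.
move=> P0; set D := msize P.
pose E (m : 'X_{1..n}) := (\sum_(i < n) m i * D ^ i)%N.
have suppD m i : m \in msupp P -> (m i < D)%N.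
  by move=> ms; apply: leq_ltn_trans (mdeg_ge m i) (msize_mdeg_lt ms).
have Einj m m' : m \in msupp P -> m' \in msupp P -> E m = E m' -> m = m'.
  move=> ms ms' eE; apply/mnmP => i.
  exact: (digits (suppD m ^~ ms) (suppD m' ^~ ms') eE).
pose Q : {poly R} := \sum_(m <- msupp P) P@_m *: 'X^(E m).
have evQ y : meval (fun i => y ^+ (D ^ i)) P = Q.[y].
  rewrite mevalE /Q horner_sum; apply: eq_bigr => m _.
  rewrite hornerZ hornerXn; congr (_ * _).
  rewrite /E -prodrXr; apply: eq_bigr => i _.
  by rewrite -exprM mulnC.
have Q0 : Q != 0.
  have : msupp P != [::] by rewrite msupp_eq0.
  case Es: (msupp P) => [|m0 s] // _.
  have m0s : m0 \in msupp P by rewrite Es inE eqxx.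
  apply/eqP => /(congr1 (fun p : {poly R} => p`_(E m0))).
  rewrite coef0 /Q coef_sum (bigD1_seq m0) //= ?msupp_uniq //.
  rewrite coefZ coefXn eqxx mulr1 big1_seq ?addr0.
    by apply/eqP; rewrite mcoeff_eq0 negbK.
  move=> m /andP[mm0 ms]; rewrite coefZ coefXn.
  case: eqP => [/esym/Einj|]; last by rewrite mulr0.
  by move=> /(_ ms m0s) em; rewrite em eqxx in mm0.
pose rs := [seq (k.+2%:R^-1 : R) | k <- iota 0 (size Q)].
have urs : uniq rs.
  rewrite map_inj_uniq ?iota_uniq // => a b /invr_inj /eqP.
  by rewrite eqr_nat => /eqP [].
have : ~~ all (root Q) rs.
  apply/negP => allr; have := max_poly_roots Q0 allr urs.
  by rewrite size_map size_iota ltnn.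
case/allPn => y /mapP [k _ ->] nr; exists k.
by rewrite evQ.
Qed.
End Sep.

Section C4.
Variable R : realType.
Definition Code := (seq rat * seq nat * nat)%type.

Definition dcode (c : Code) (r : R) : R :=
  (c.2.+2%:R^-1) ^+ (nth 0%N c.1.2 (count (fun q : rat => ratr q < r) c.1.1)).

Lemma dcode_ge0 c r : 0 <= dcode c r.
Proof. by rewrite /dcode exprn_ge0 // invr_ge0 ler0n. Qed.

Lemma dcode_le1 c r : dcode c r <= 1.
Proof.
rewrite /dcode exprn_ile1 // ?invr_ge0 ?ler0n // invf_le1 ?ltr0n //.
by rewrite ler1n.
Qed.

Lemma C4 n (r : 'I_n -> R) (P : {mpoly R[n]}) : injective r -> P != 0 ->
  exists c, meval (fun i => dcode c (r i)) P != 0.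
Proof.
move=> rinj P0; have [q qinj] := sep rinj.
have [k Hk] := kronecker P0.
set D := msize P in Hk.
pose j i := count (fun z : rat => ratr z < r i) q.
pose L := (\sum_(i < n) (j i).+1)%N.
pose g := mkseq (fun p => \sum_(i < n | j i == p) D ^ i)%N L.
exists (q, g, k); rewrite (meval_eq _ (v2 := fun i => (k.+2%:R^-1 : R) ^+ (D ^ i))) //.
move=> i; rewrite /dcode /=; congr (_ ^+ _).
rewrite nth_mkseq; last first.
  by rewrite /L (bigD1 i) //= leq_addr.
rewrite (eq_bigl (fun i' => i' == i)) ?big_pred1_eq // => i' /=.
by apply/eqP/eqP => [/qinj|->].
Qed.

Lemma meval0v n (P : {mpoly R[n]}) : meval (fun _ => 0) P = P@_0%MM.
Proof.
rewrite mevalE (eq_bigr (fun m => P@_m * (m == 0%MM)%:R)); last first.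
  move=> m _; congr (_ * _); case: eqP => [->|/eqP m0].
    by apply: big1 => i _; rewrite mnm0E expr0.
  have [i mi] : exists i, m i != 0%N.
    apply/existsP; apply: contraNT m0 => /existsPn H.
    by apply/eqP/mnmP => i; rewrite mnm0E; apply/eqP; rewrite -[_ == _]negbK H.
  by rewrite (bigD1 i) //= expr0n (negbTE mi) mul0r.
have [m0s|m0s] := boolP (0%MM \in msupp P).
  rewrite (bigD1_seq 0%MM) ?msupp_uniq //= eqxx mulr1 big1 ?addr0 //.
  by move=> m /negbTE ->; rewrite mulr0.
rewrite big1_seq; last by move=> m /andP[_ ms]; case: eqP => [em|_]; [move: ms; rewrite em (negbTE m0s) | rewrite mulr0].
by apply/esym/eqP; rewrite mcoeff_eq0.
Qed.

Lemma meval_scale01 n (P : {mpoly R[n]}) (b : bool) (v : 'I_n -> R) :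
  P@_0%MM = 0 -> meval (fun i => b%:R * v i) P = b%:R * meval v P.
Proof.
case: b => P0; first by rewrite mul1r; apply: meval_eq => i; rewrite mul1r.
rewrite mul0r -P0 -meval0v; apply: meval_eq => i; by rewrite mul0r.
Qed.

Lemma meval_bound n (P : {mpoly R[n]}) (v : 'I_n -> R) :
  (forall i, `|v i| <= 1) -> `|meval v P| <= \sum_(m <- msupp P) `|P@_m|.
Proof.
move=> v1; rewrite mevalE; apply: le_trans (ler_norm_sum _ _ _) _.
apply: ler_sum => m _; rewrite normrM ler_piMr //.
rewrite normr_prod; apply: prodr_ile1 => i _; rewrite normr_ge0 /=.
by rewrite normrX exprn_ile1.
Qed.
End C4.

Import numFieldNormedType.Exports.

Section Basic.
Variable R : realType.
Local Notation mu := (@lebesgue_measure R).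

Lemma I01_meas : measurable (I01 R).
Proof. exact: measurable_itv. Qed.

Lemma I01_measure : mu (I01 R) = 1%E.
Proof. by rewrite /I01 lebesgue_measure_itv /= lte_fin ltr01 oppr0 adde0. Qed.

Lemma I01_not_negligible : ~ mu.-negligible (I01 R).
Proof.
move=> H; have := (negligibleP mu I01_meas).1 H.
move=> H0; have : (1%E : \bar R) = 0%E by rewrite -I01_measure; exact: H0.
by move=> /eqP; rewrite onee_eq0.
Qed.

Lemma cover_exists : null_cover [set [set x] | x in I01 R].
Proof.
split.
  move=> _ [x Ix <-]; split; first by move=> y ->.
  by apply: (negligibleP mu (measurable_set1 x)).2; exact: lebesgue_measure_set1.
by move=> x Ix; exists [set x] => //; exists x.
Qed.

Lemma inj_card T U (A : set T) (B : set U) : inj_into A B -> (A #<= B)%card.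
Proof.
move=> [f [fAB finj]].
have : $|{injfun A >-> B}|.
  apply/injfunPex; exists f; first by move=> a /fAB.
  by move=> a b; rewrite !inE => Aa Ab; apply: finj.
by case=> g; apply: inj_card_le g.
Qed.
End Basic.

Fixpoint mem_l {T} (x : T) (s : seq T) : Prop :=
  if s is y :: s' then y = x \/ mem_l x s' else False.

Section Main.
Variable R : realType.
Local Notation mu := (@lebesgue_measure R).
Variable F0 : set (set R).
Hypothesis F0c : null_cover F0.

Definition TT := {N : set R | F0 N}.

Lemma sval_inj : injective (@proj1_sig (set R) F0).
Proof. by move=> [a ha] [b hb] /= E; apply: eq_exist. Qed.

Lemma new_elt (s : seq TT) : exists t : TT, forall u, mem_l u s -> u <> t.
Proof.
have nU : forall s : seq TT, mu.-negligible (fun x => exists u, mem_l u s /\ proj1_sig u x).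
  elim=> [|u s' IH].
    by apply: negligibleS (negligible_set0 mu) => x [u [[]]].
  apply: negligibleS (negligibleU (F0c.1 _ (proj2_sig u)).2 IH).
  by move=> x [v [[<-|vs] vx]]; [left|right; exists v].
have [x [Ix nUx]] : exists x, I01 R x /\ ~ (exists u, mem_l u s /\ proj1_sig u x).
  apply: contrapT => H; apply: (@I01_not_negligible R); apply: negligibleS (nU s).
  move=> x Ix; apply: contrapT => nUx; apply: H; by exists x.
have [N F0N Nx] := F0c.2 x Ix.
exists (exist _ N F0N); move=> u inu eq; apply: nUx; exists u; split; [exact: inu|by rewrite eq].
Qed.

Lemma e_exists : exists e : nat -> TT, injective e.
Proof.
have [nw Hnw] := choice new_elt.
pose pref := fix pref n := if n is n'.+1 then nw (pref n') :: pref n' else [::].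
exists (fun n => nw (pref n)).
have inpref m n : (m < n)%N -> mem_l (nw (pref m)) (pref n).
  elim: n => // n IH; rewrite ltnS leq_eqVlt => /orP[/eqP ->|/IH]; by [left|right].
move=> m n E; case: (ltngtP m n) => // h.
- by case: (Hnw (pref n) _ (inpref _ _ h)).
- by case: (Hnw (pref m) _ (inpref _ _ h)).
Qed.
End Main.

Section Net.
Variable R : realType.
Local Notation mu := (@lebesgue_measure R).
Variable F0 : set (set R).
Hypothesis F0c : null_cover F0.
Variable Bf : TT F0 -> set R.
Hypothesis Bfm : forall u, measurable (Bf u).
Hypothesis Bfs : forall u, proj1_sig u `<=` Bf u.
Hypothesis Bf0 : forall u, mu (Bf u) = 0.

Definition NA := (seq (TT F0) * Code)%type.
Definition nle (a b : NA) := forall u, mem_l u a.1 -> mem_l u b.1.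
Definition c0 : Code := ([::], [::], 0%N).

Fixpoint Mset (s : seq (TT F0)) : set R :=
  if s is u :: s' then Bf u `|` Mset s' else set0.
Definition Uset s := I01 R `\` Mset s.

Lemma Mset_meas s : measurable (Mset s).
Proof. by elim: s => [|u s IH] /=; [exact: measurable0|exact: measurableU]. Qed.

Lemma Mset_neg s : mu.-negligible (Mset s).
Proof.
elim: s => [|u s IH] /=; first exact: negligible_set0.
apply: negligibleU IH; exact: (negligibleP mu (Bfm u)).2 (Bf0 u).
Qed.

Lemma Mset_in u s : mem_l u s -> Bf u `<=` Mset s.
Proof.
elim: s => [//|v s IH] /= [->|us] x bx; [by left|right; exact: IH].
Qed.

Lemma Uset_meas s : measurable (Uset s).
Proof. exact: measurableD (@I01_meas R) (Mset_meas s). Qed.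

Lemma Uset_sub s : Uset s `<=` I01 R.
Proof. by move=> x []. Qed.

Lemma Uset_measure s : mu (Uset s) = 1%E.
Proof.
have M0 : mu (Mset s) = 0 := (negligibleP mu (Mset_meas s)).1 (Mset_neg s).
have I0 : mu (I01 R `&` Mset s) = 0.
  apply/eqP; rewrite eq_le measure_ge0 andbT -M0.
  by apply: le_measure; rewrite ?inE; [exact: measurableI (@I01_meas R) (Mset_meas s)|exact: Mset_meas|exact: subIsetr].
rewrite /Uset measureD //.
- rewrite [X in (X - _)%E](_ : _ = 1%E); last exact: (I01_measure R).
  rewrite [X in (_ - X)%E](_ : _ = 0%E); last exact: I0.
  by rewrite sube0.
- exact: I01_meas.
- exact: Mset_meas.
- rewrite [X in (X < _)%E](_ : _ = 1%E); [exact: ltry|exact: (I01_measure R)].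
Qed.

Lemma Uset_nil : Uset [::] 0.
Proof. by split => //=; rewrite /I01 /= in_itv /= lexx ler01. Qed.

Lemma directed_nle : directed_set nle.
Proof.
split.
- by exists ([::], c0).
- by move=> a u.
- by move=> a b c ab bc u /ab /bc.
- move=> a b; exists (a.1 ++ b.1, c0); split => u /=.
  + elim: a.1 => //= v s IH [->|/IH]; by [left|right].
  + elim: a.1 => //= v s IH /IH; by right.
Qed.

Lemma not_card (t : TT F0) : ~ is_cardinal_order nle.
Proof.
move=> [_ [anti _]].
have : ([:: t], c0) = ([:: t; t], c0) :> NA.
  apply: anti => u /=; [move=> [->|[]]; by left | move=> [->|[->|[]]]; by left].
by [].
Qed.

Lemma intE s (q : R) :
  (\int[mu]_(x in I01 R) (`|\1_(Uset s) x * q - 0|)%:E)%E = (`|q|)%:E.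
Proof.
have -> : (fun x => (`|\1_(Uset s) x * q - 0|)%:E) =
    (fun x => (`|q|)%:E * (\1_(Uset s) x)%:E)%E.
  apply: boolp.funext => x; rewrite subr0 normrM indicE.
  by case: (x \in Uset s); rewrite ?normr1 ?normr0 ?mul1r ?mul0r ?mule1 ?mule0.
rewrite ge0_integralZl_EFin //.
- rewrite integral_indic; [|exact: I01_meas|exact: Uset_meas s].
  rewrite setIidl; last exact: Uset_sub.
  rewrite [X in (_ * X)%E](_ : _ = 1%E); last exact: Uset_measure.
  by rewrite mule1.
- exact: I01_meas.
- apply/(measurable_realfun.measurable_EFinP _ (\1_(Uset s))); exact: measurable_realfun.measurable_indic (Uset_meas s).
Qed.

Lemma ND_gen (Q : Code -> R) (B : R) : (forall c, `|Q c| <= B) ->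
  (exists c, Q c != 0) -> ND nle (fun a t => \1_(Uset a.1) t * Q a.2).
Proof.
move=> QB [cs Qcs].
have B0 : 0 <= B by apply: le_trans (QB c0).
split.
  move=> a x nIx; rewrite indicE memNset ?mul0r //; by move=> /Uset_sub.
split.
  move=> a; apply: measurable_realfun.measurable_funM; [exact: measurable_realfun.measurable_indic (Uset_meas _)|exact: measurable_cst].
split.
  exists (cst B); split.
    apply/integrableP; split; first by apply/(measurable_realfun.measurable_EFinP _ (cst B)); exact: measurable_cst.
    have -> : (fun x : R => `|(EFin \o cst B) x|%E) = cst (`|B|%:E).
      by apply: boolp.funext => x /=.
    rewrite integral_cst; last exact: I01_meas.
    rewrite [X in (_ * X)%E](_ : _ = 1%E); last exact: (I01_measure R).
    by rewrite mule1 ltry.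
  move=> a; apply: aeW => x Ix; rewrite normrM indicE /=.
  by case: (x \in _); rewrite ?normr1 ?normr0 ?mul1r ?mul0r.
exists (fun _ => 0); split.
  exact: (integrable0 mu (I01 R)).
split.
  apply: aeW => t It U nU.
  have [N F0N Nt] := F0c.2 t It.
  exists ([:: exist _ N F0N], c0) => -[s c] le0 /=.
  have Mt : Mset s t.
    apply: (Mset_in (le0 _ (or_introl erefl))).
    exact: (@Bfs (exist F0 N F0N) t Nt).
  rewrite indicE memNset ?mul0r; first exact: nbhs_singleton nU.
  by move=> [].
move=> H.
have qpos : 0 < `|Q cs| by rewrite normr_gt0.
have [a0 Ha0] := H _ (@nbhs_open_ereal_lt R 0 (fun _ => `|Q cs|) qpos).
have := Ha0 (a0.1, cs) (fun u h => h); rewrite /= intE.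
by rewrite ltxx.
Qed.
End Net.

Section Gen.
Variable R : realType.
Local Notation mu := (@lebesgue_measure R).
Variable F0 : set (set R).
Variable Bf : TT F0 -> set R.

Definition gen (r : R) : NA F0 -> R -> R :=
  fun a t => \1_(Uset Bf a.1) t * dcode a.2 r.

Lemma genE n (r : 'I_n -> R) (x : 'I_n -> NA F0 -> R -> R) (P : {mpoly R[n]}) :
  (forall i, x i = gen (r i)) -> no_const P ->
  net_eval P x = fun a t => \1_(Uset Bf a.1) t * meval (fun i => dcode a.2 (r i)) P.
Proof.
move=> xr nc; apply: boolp.funext => a; apply: boolp.funext => t.
rewrite /net_eval indicE -meval_scale01 //; apply: meval_eq => i.
by rewrite xr /gen indicE.
Qed.

Lemma gen_inj : injective gen.
Proof.
move=> r r' E; apply: contrapT => rr'.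
pose r2 : 'I_2 -> R := fun i => if val i == 0%N then r else r'.
have r2inj : injective r2.
  move=> [[|[|i]] hi] [[|[|j]] hj] //=; rewrite /r2 /= => h;
    try (by apply: val_inj); try (by case: (rr' h)); by case: (rr' (esym h)).
have P0 : ('X_ord0 - 'X_ord_max : {mpoly R[2]}) != 0.
  apply/eqP => /(congr1 (mcoeff U_(ord0))).
  by rewrite mcoeffB !mcoeffXU eqxx /= mcoeff0 subr0 => /eqP; rewrite oner_eq0.
have [c] := C4 r2inj P0.
rewrite mevalB !mevalXU /r2 /= subr_eq0 => /eqP; apply.
have := congr1 (fun f => f ([::], c) 0) E; rewrite /gen /=.
by rewrite indicE mem_set ?mul1r //; exact: Uset_nil.
Qed.
End Gen.

Theorem mainTheorem4 (R : realType) :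
  exists (A : Type) (le : A -> A -> Prop),
    [/\ directed_set le,
        ~ is_cardinal_order le,
        card_is_covN R A &
        @strongly_algebrable R A R (@ND R A le)].
Proof.
have [F0 F0c F0min] := min_inj (cover_exists R).
have [e einj] := e_exists F0c.
have [p pinj] := sq_inj einj.
have [enc encinj] := seq_inj einj.
have [Bf HBf] := choice (fun u : TT F0 => (F0c.1 _ (proj2_sig u)).2).
have Bfm u : measurable (Bf u) by case: (HBf u).
have Bf0 u : (@lebesgue_measure R) (Bf u) = 0 by case: (HBf u).
have Bfs u : proj1_sig u `<=` Bf u by case: (HBf u).
exists (NA F0), (@nle R F0); split.
- exact: directed_nle.
- exact: not_card (e 0%N).
- have AF0 : inj_into [set: NA F0] F0.
    exists (fun a => proj1_sig (p (enc a.1, e (pickle a.2)))); split.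
      by move=> a _; exact: proj2_sig.
    move=> [s c] [s' c'] _ _ /sval_inj /pinj [/encinj -> /einj /(pcan_inj pickleK) ->].
    by [].
  have F0A : inj_into F0 [set: NA F0].
    exists (fun N => match pselect (F0 N) with
      | left h => ([:: exist F0 N h], c0) | right _ => ([::], c0) end).
    split => // N N' hN hN'.
    case: pselect => // h; case: pselect => // h' [E].
    exact: E.
  split.
    exists F0; split => //; apply: Cantor_Bernstein; exact: inj_card.
  move=> F Fc; apply: inj_card; exact: inj_into_trans AF0 (F0min F Fc).
- exists (range (gen Bf)).
  have getr n (x : 'I_n -> NA F0 -> R -> R) : (forall i, range (gen Bf) (x i)) ->
      injective x -> exists r : 'I_n -> R, injective r /\ forall i, x i = gen Bf (r i).
    move=> Xx xinj.
    have : forall i, exists r, gen Bf r = x i by move=> i; have [r _ h] := Xx i; exists r.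
    move=> /choice [r Hr]; exists r; split; last by move=> i; rewrite Hr.
    by move=> i j E; apply: xinj; rewrite -Hr -(Hr j) E.
  split.
    move=> f [r _ <-] a x nIx; rewrite /gen indicE memNset ?mul0r //.
    by move=> /Uset_sub.
  split.
    apply: Cantor_Bernstein; apply: inj_card.
      exists (fun f => match pselect (exists r, gen Bf r = f) with
        | left h => proj1_sig (cid h) | right _ => 0 end).
      split => // f g [r _ <-] [r' _ <-].
      case: pselect => [h|[]]; last by exists r.
      case: pselect => [h'|[]]; last by exists r'.
      by move=> E; rewrite -(proj2_sig (cid h)) -(proj2_sig (cid h')) E.
    exists (gen Bf); split; [by move=> r _; exists r|by move=> r r' _ _ /gen_inj].
  split.
    move=> n x P xinj Xx P0 nc.
    have [r [rinj xr]] := getr n x Xx xinj.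
    have [c Hc] := C4 rinj P0.
    rewrite (genE xr nc) => /(congr1 (fun f => f ([::], c) 0)) /=.
    rewrite indicE mem_set ?mul1r; [exact/eqP|exact: Uset_nil].
  move=> n x P xinj Xx nc H.
  have [r [rinj xr]] := getr n x Xx xinj.
  rewrite (genE xr nc) in H *.
  apply: (ND_gen F0c Bfm Bfs Bf0 (Q := fun c => meval (fun i => dcode c (r i)) P) (B := \sum_(m <- msupp P) `|P@_m|)).
    move=> c; apply: meval_bound => i.
    by rewrite ger0_norm ?dcode_ge0 ?dcode_le1.
  apply: contrapT => nQ; apply: H; apply: boolp.funext => a; apply: boolp.funext => t.
  have -> : meval (fun i => dcode a.2 (r i)) P = 0.
    by apply: contrapT => h; apply: nQ; exists a.2; apply/eqP.
  by rewrite mulr0.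
Qed.
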